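(* Let $A$ be a finite-dimensional associative algebra over $K=\mathbb{R}$ or $\mathbb{C}$ with unit $u$, and let $\{\cdot,\cdot\}$ be a quadratic Poisson bracket on $A$ compatible with its multiplication, with dual map $\delta\colon\mathrm{Symm}(A\otimes A)\to A\wedge A$. Then the map $\Delta\colon A\to A\wedge A$, $\Delta(x)=\delta(x\otimes u+u\otimes x)$, is a cocommutator making the Lie algebra $A_L$ into a Lie bialgebra.
   Context: $A_L$ denotes the Lie algebra on the vector space $A$ with bracket $[a,b]=ab-ba$. A quadratic Poisson bracket on $A$ is a Poisson bracket on $C^\infty(A)$ such that the bracket of two linear functions is a homogeneous quadratic function; it is encoded by $\delta^*\colon A^*\wedge A^*\to\mathrm{Sym}^2(A^* )$, $\delta^*(\xi\wedge\eta)=\{\xi,\eta\}$, and $\delta$ is its dual map (identifying $\mathrm{Symm}(A\otimes A)$, the symmetric tensors, with $(\mathrm{Sym}^2A^* )^*$ and $A\wedge A$, the skew-symmetric tensors in $A\otimes A$, with $(A^*\wedge A^* )^*$). Compatibility with the multiplication means that the multiplication map $A\times A\to A$ is a Poisson map when $A\times A$ carries the product Poisson structure. A Lie bialgebra structure on a Lie algebra $L$ is a linear map $\Delta\colon L\to L\wedge L$ which is a 1-cocycle with respect to the adjoint action and whose dual $\Delta^*\colon L^*\wedge L^*\to L^*$ is a Lie bracket. *)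

(* Defs.v *)
From HB Require Import structures.
From mathcomp Require Import all_boot all_order all_algebra.
From mathcomp Require Import reals.
From mathcomp Require Import complex.
Set Implicit Arguments. Unset Strict Implicit. Unset Printing Implicit Defensive.
Import Order.TTheory GRing.Theory Num.Theory.
Local Open Scope ring_scope.

Section Defs.
Variables (K : fieldType) (n : nat).

(* A = K^n with basis e_0..e_(n-1); vectors and covectors are given by their
   coordinates, 2-tensors in A (x) A by their components. *)
Definition vec := 'I_n -> K.
Definition tens := 'I_n -> 'I_n -> K.

Definition bvec (k : 'I_n) : vec := fun i => (i == k)%:R.

(* multiplication with structure constants: e_i e_j = \sum_k m i j k e_k *)
Definition mulA (m : 'I_n -> 'I_n -> 'I_n -> K) (a b : vec) : vec :=
  fun k => \sum_(i < n) \sum_(j < n) a i * b j * m i j k.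

Definition unital_assoc_algebra (m : 'I_n -> 'I_n -> 'I_n -> K) (u : vec) :=
  (forall a b c k, mulA m (mulA m a b) c k = mulA m a (mulA m b c) k) /\
  (forall a k, mulA m u a k = a k) /\ (forall a k, mulA m a u k = a k).

Definition comm_br (m : 'I_n -> 'I_n -> 'I_n -> K) (a b : vec) : vec :=
  fun k => mulA m a b k - mulA m b a k.

(* Quadratic bracket on linear coordinate functions x_0..x_(n-1):
     {x_i, x_j}(x) = \sum_(k,l) P i j k l x_k x_l,
   i.e. delta^dual(x_i /\ x_j) = \sum P i j k l x_k x_l in Sym^2(A^dual). *)
Definition pbr (P : 'I_n -> 'I_n -> 'I_n -> 'I_n -> K) (i j : 'I_n) (x : vec) : K :=
  \sum_(k < n) \sum_(l < n) P i j k l * x k * x l.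

(* partial derivative d/dx_a of the quadratic function pbr P i j *)
Definition dpbr (P : 'I_n -> 'I_n -> 'I_n -> 'I_n -> K) (i j a : 'I_n) (x : vec) : K :=
  \sum_(l < n) (P i j a l + P i j l a) * x l.

(* {x_i, f} = \sum_a {x_i, x_a} d f / d x_a  (Leibniz rule) *)
Definition quadratic_poisson (P : 'I_n -> 'I_n -> 'I_n -> 'I_n -> K) :=
  (* the coefficients represent an element of Sym^2(A^dual) *)
  (forall i j k l, P i j k l = P i j l k) /\
  (forall i j k l, P i j k l = - P j i k l) /\
  (* Jacobi identity on coordinate functions (equivalent to Jacobi on all
     functions, for a bivector field) *)
  (forall (i j k : 'I_n) (x : vec),
      \sum_(a < n) pbr P i a x * dpbr P j k a x
    + \sum_(a < n) pbr P j a x * dpbr P k i a x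
    + \sum_(a < n) pbr P k a x * dpbr P i j a x = 0).

(* The multiplication map A x A -> A is a Poisson map for the product Poisson
   structure: for coordinates (y, z) on A x A,
   {x_i o mult, x_j o mult}_{A x A}(y,z) = {x_i, x_j}(y z). *)
Definition mult_poisson_map (m : 'I_n -> 'I_n -> 'I_n -> K)
    (P : 'I_n -> 'I_n -> 'I_n -> 'I_n -> K) :=
  forall (i j : 'I_n) (y z : vec),
      \sum_(a < n) \sum_(b < n)
          pbr P a b y * mulA m (bvec a) z i * mulA m (bvec b) z j
    + \sum_(a < n) \sum_(b < n)
          pbr P a b z * mulA m y (bvec a) i * mulA m y (bvec b) j
    = pbr P i j (mulA m y z).

(* the dual map delta : Symm(A (x) A) -> A /\ A, on a symmetric tensor s,
   with component (i,j) the pairing of delta(s) with x_i /\ x_j *)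
Definition delta (P : 'I_n -> 'I_n -> 'I_n -> 'I_n -> K) (s : tens) : tens :=
  fun i j => \sum_(k < n) \sum_(l < n) P i j k l * s k l.

Definition symtens (x u : vec) : tens := fun k l => x k * u l + u k * x l.

Definition Delta_of (P : 'I_n -> 'I_n -> 'I_n -> 'I_n -> K) (u : vec) (x : vec) : tens :=
  delta P (symtens x u).

(* adjoint action of a on A (x) A : (ad_a (x) 1 + 1 (x) ad_a) *)
Definition ad_tens (br : vec -> vec -> vec) (a : vec) (t : tens) : tens :=
  fun p q => \sum_(i < n) t i q * br a (bvec i) p
           + \sum_(j < n) t p j * br a (bvec j) q.

(* dual bracket Delta^dual on L^dual (covectors given by coordinates):
   Delta^dual(xi /\ eta)(x) = <Delta(x), xi (x) eta> *)
Definition dual_br (D : vec -> tens) (xi eta : vec) : vec :=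
  fun k => \sum_(i < n) \sum_(j < n) xi i * eta j * D (bvec k) i j.

Definition lie_bialgebra (br : vec -> vec -> vec) (D : vec -> tens) :=
  (forall (c : K) (x y : vec) i j, D (fun k => c * x k + y k) i j = c * D x i j + D y i j) /\
  (* Delta takes values in L /\ L *)
  (forall x i j, D x i j = - D x j i) /\
  (forall a b i j, D (br a b) i j = ad_tens br a (D b) i j - ad_tens br b (D a) i j) /\
  (* Delta^dual is a Lie bracket: Jacobi identity (skew-symmetry and bilinearity
     follow from the above) *)
  (forall xi eta zeta k,
      dual_br D xi (dual_br D eta zeta) k + dual_br D eta (dual_br D zeta xi) k
    + dual_br D zeta (dual_br D xi eta) k = 0).

End Defs.

(* Main.v *)
From Pilot Require Import Defs.
From HB Require Import structures.
From mathcomp Require Import all_boot all_order all_algebra.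
From mathcomp Require Import reals.
From mathcomp Require Import complex.
From mathcomp Require Import ring.
From Stdlib Require Import FunctionalExtensionality.
Import Order.TTheory GRing.Theory Num.Theory.
Local Open Scope ring_scope.
Local Notation mulA := Pilot.Defs.mulA.

Section Gen.
Variables (K : fieldType) (n : nat).
Local Notation e := (bvec K).

Lemma sum_bvec (F : 'I_n -> K) j : \sum_(d < n) F d * e d j = F j.
Proof.
rewrite (bigD1 j) //= [X in _ + X]big1 ?addr0; first by rewrite /bvec eqxx mulr1.
by move=> d dj; rewrite /bvec eq_sym (negbTE dj) mulr0.
Qed.

Lemma L1 (X : 'I_n -> 'I_n -> K) (Y : 'I_n -> K) j :
  \sum_(c < n) \sum_(d < n) X c d * Y c * e d j = \sum_(c < n) X c j * Y c.
Proof. by apply: eq_bigr => c _; rewrite (sum_bvec (fun d => X c d * Y c)). Qed.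

Lemma L2 (X : 'I_n -> 'I_n -> K) (Z : 'I_n -> K) i :
  \sum_(c < n) \sum_(d < n) X c d * e c i * Z d = \sum_(d < n) X i d * Z d.
Proof.
rewrite exchange_big; apply: eq_bigr => d _ /=.
rewrite -(sum_bvec (fun c => X c d * Z d) i); apply: eq_bigr => c _; ring.
Qed.

Lemma R1 (F : 'I_n -> 'I_n -> 'I_n -> 'I_n -> K) :
  \sum_(i < n) \sum_(j < n) \sum_(p < n) \sum_(q < n) F i j p q =
  \sum_(i < n) \sum_(p < n) \sum_(q < n) \sum_(j < n) F i j p q.
Proof.
apply: eq_bigr => i _; rewrite exchange_big; apply: eq_bigr => p _.
exact: exchange_big.
Qed.

Lemma R2 (F : 'I_n -> 'I_n -> 'I_n -> 'I_n -> K) :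
  \sum_(i < n) \sum_(j < n) \sum_(p < n) \sum_(q < n) F i j p q =
  \sum_(q < n) \sum_(i < n) \sum_(p < n) \sum_(j < n) F i j p q.
Proof.
apply: eq_trans (R1 F) _.
transitivity (\sum_(i < n) \sum_(q < n) \sum_(p < n) \sum_(j < n) F i j p q).
  by apply: eq_bigr => i _; exact: exchange_big.
exact: exchange_big.
Qed.

Lemma R3 (F : 'I_n -> 'I_n -> 'I_n -> 'I_n -> K) :
  \sum_(i < n) \sum_(j < n) \sum_(p < n) \sum_(q < n) F i j p q =
  \sum_(p < n) \sum_(q < n) \sum_(i < n) \sum_(j < n) F i j p q.
Proof.
apply: eq_trans (R1 F) _.
rewrite exchange_big; apply: eq_bigr => p _; exact: exchange_big.
Qed.

Lemma pull (A : 'I_n -> K) (B : 'I_n -> 'I_n -> 'I_n -> K) (C : 'I_n -> 'I_n -> K) :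
  \sum_(i < n) \sum_(j < n) A i * (\sum_(p < n) \sum_(q < n) B p q j) * C i j =
  \sum_(i < n) \sum_(j < n) \sum_(p < n) \sum_(q < n) A i * B p q j * C i j.
Proof.
apply: eq_bigr => i _; apply: eq_bigr => j _; rewrite mulr_sumr mulr_suml.
apply: eq_bigr => p _; rewrite mulr_sumr mulr_suml; done.
Qed.

Variable P : 'I_n -> 'I_n -> 'I_n -> 'I_n -> K.
Definition B2 (x y : vec K n) i j := \sum_(k < n) \sum_(l < n) P i j k l * x k * y l.

Lemma B2_linl c x x' y i j :
  B2 (fun k => c * x k + x' k) y i j = c * B2 x y i j + B2 x' y i j.
Proof.
rewrite /B2 mulr_sumr -big_split; apply: eq_bigr => k _ /=.
rewrite mulr_sumr -big_split; apply: eq_bigr => l _ /=; ring.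
Qed.

Lemma B2_linr c x y y' i j :
  B2 x (fun k => c * y k + y' k) i j = c * B2 x y i j + B2 x y' i j.
Proof.
rewrite /B2 mulr_sumr -big_split; apply: eq_bigr => k _ /=.
rewrite mulr_sumr -big_split; apply: eq_bigr => l _ /=; ring.
Qed.

Lemma B2C (Hs : forall i j k l, P i j k l = P i j l k) i j x y :
  B2 x y i j = B2 y x i j.
Proof.
rewrite /B2 exchange_big; apply: eq_bigr => k _; apply: eq_bigr => l _.
rewrite Hs; ring.
Qed.

Lemma B2N (Ha : forall i j k l, P i j k l = - P j i k l) i j x y :
  B2 x y i j = - B2 x y j i.
Proof.
rewrite /B2 -sumrN; apply: eq_bigr => k _; rewrite -sumrN; apply: eq_bigr => l _.
rewrite Ha; ring.
Qed.

Lemma B2_bvec_l b i j y : B2 (e b) y i j = \sum_(l < n) P i j b l * y l.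
Proof.
rewrite /B2 (bigD1 b) //= [X in _ + X]big1 ?addr0.
  apply: eq_bigr => l _; rewrite /bvec eqxx /=; ring.
move=> k kb; apply: big1 => l _; rewrite /bvec (negbTE kb) /=; ring.
Qed.

Lemma B2_bvec_r b i j x : B2 x (e b) i j = \sum_(k < n) P i j k b * x k.
Proof.
rewrite /B2; apply: eq_bigr => k _.
rewrite (bigD1 b) //= [X in _ + X]big1 ?addr0.
  rewrite /bvec eqxx /=; ring.
move=> l lb; rewrite /bvec (negbTE lb) /=; ring.
Qed.

Lemma B2_dpbr i j b u : B2 (e b) u i j + B2 u (e b) i j = dpbr P i j b u.
Proof.
rewrite B2_bvec_l B2_bvec_r /dpbr -big_split; apply: eq_bigr => l _ /=; ring.
Qed.

Lemma Delta_B2 u x i j : Delta_of P u x i j = B2 x u i j + B2 u x i j.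
Proof.
rewrite /Delta_of /delta /symtens /B2 -big_split; apply: eq_bigr => k _ /=.
rewrite -big_split; apply: eq_bigr => l _ /=; ring.
Qed.


Lemma B2_linl_f c x x' y :
  B2 (fun k => c * x k + x' k) y = fun i j => c * B2 x y i j + B2 x' y i j.
Proof. by do 2 apply: functional_extensionality => ?; rewrite B2_linl. Qed.
Lemma B2_linr_f c x y y' :
  B2 x (fun k => c * y k + y' k) = fun i j => c * B2 x y i j + B2 x y' i j.
Proof. by do 2 apply: functional_extensionality => ?; rewrite B2_linr. Qed.

Definition S2 (X : 'I_n -> 'I_n -> K) (Y Z : 'I_n -> K) :=
  \sum_(c < n) \sum_(d < n) X c d * Y c * Z d.

Lemma S2_X k X X' Y Z :
  S2 (fun c d => k * X c d + X' c d) Y Z = k * S2 X Y Z + S2 X' Y Z.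
Proof.
rewrite /S2 mulr_sumr -big_split; apply: eq_bigr => c _ /=.
rewrite mulr_sumr -big_split; apply: eq_bigr => d _ /=; ring.
Qed.
Lemma S2_Y k X Y Y' Z :
  S2 X (fun c => k * Y c + Y' c) Z = k * S2 X Y Z + S2 X Y' Z.
Proof.
rewrite /S2 mulr_sumr -big_split; apply: eq_bigr => c _ /=.
rewrite mulr_sumr -big_split; apply: eq_bigr => d _ /=; ring.
Qed.
Lemma S2_Z k X Y Z Z' :
  S2 X Y (fun c => k * Z c + Z' c) = k * S2 X Y Z + S2 X Y Z'.
Proof.
rewrite /S2 mulr_sumr -big_split; apply: eq_bigr => c _ /=.
rewrite mulr_sumr -big_split; apply: eq_bigr => d _ /=; ring.
Qed.

Variable m : 'I_n -> 'I_n -> 'I_n -> K.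
Definition mulAf (z y : vec K n) := mulA m y z.

Lemma mulAl_ff c y y' :
  mulA m (fun k => c * y k + y' k) = fun z k => c * mulA m y z k + mulA m y' z k.
Proof.
do 2 apply: functional_extensionality => ?.
rewrite /mulA mulr_sumr -big_split; apply: eq_bigr => a _ /=.
rewrite mulr_sumr -big_split; apply: eq_bigr => b _ /=; ring.
Qed.
Lemma mulAf_ff c z z' :
  mulAf (fun k => c * z k + z' k) = fun y k => c * mulAf z y k + mulAf z' y k.
Proof.
do 2 apply: functional_extensionality => ?.
rewrite /mulAf /mulA mulr_sumr -big_split; apply: eq_bigr => a _ /=.
rewrite mulr_sumr -big_split; apply: eq_bigr => b _ /=; ring.
Qed.
Lemma mulAr_f c y z z' :
  mulA m y (fun k => c * z k + z' k) = fun k => c * mulA m y z k + mulA m y z' k.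
Proof. by have := mulAf_ff c z z'; move/(congr1 (fun f => f y)). Qed.

Definition Q4 (y1 y2 z1 z2 : vec K n) i j :=
  S2 (B2 y1 y2) (fun c => mulAf z1 (e c) i) (fun d => mulAf z2 (e d) j)
  + S2 (B2 z1 z2) (fun c => mulA m y1 (e c) i) (fun d => mulA m y2 (e d) j)
  - B2 (mulA m y1 z1) (mulA m y2 z2) i j.

Ltac lin := rewrite /Q4 ?B2_linl_f ?B2_linr_f ?mulAl_ff ?mulAf_ff ?mulAr_f;
  cbv beta; rewrite ?B2_linl_f ?B2_linr_f ?S2_X ?S2_Y ?S2_Z; ring.

Lemma Q4_lin1 c y y' y2 z1 z2 i j : Q4 (fun k => c * y k + y' k) y2 z1 z2 i j
  = c * Q4 y y2 z1 z2 i j + Q4 y' y2 z1 z2 i j.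
Proof. lin. Qed.
Lemma Q4_lin2 c y y' y1 z1 z2 i j : Q4 y1 (fun k => c * y k + y' k) z1 z2 i j
  = c * Q4 y1 y z1 z2 i j + Q4 y1 y' z1 z2 i j.
Proof. lin. Qed.
Lemma Q4_lin3 c z z' y1 y2 z2 i j : Q4 y1 y2 (fun k => c * z k + z' k) z2 i j
  = c * Q4 y1 y2 z z2 i j + Q4 y1 y2 z' z2 i j.
Proof. lin. Qed.
Lemma Q4_lin4 c z z' y1 y2 z1 i j : Q4 y1 y2 z1 (fun k => c * z k + z' k) i j
  = c * Q4 y1 y2 z1 z i j + Q4 y1 y2 z1 z' i j.
Proof. lin. Qed.


Lemma B2C_f (Hs : forall i j k l, P i j k l = P i j l k) x y : B2 x y = B2 y x.
Proof. by do 2 apply: functional_extensionality => ?; apply: B2C. Qed.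

Lemma solve2 (two : (2:K) != 0) (x y z : K) : z = 0 -> 2 * x + z = 2 * y -> x = y.
Proof. by move=> ->; rewrite addr0 => /(mulfI two). Qed.

Section Unit.
Variable u : vec K n.
Hypothesis Hl : forall a k, mulA m u a k = a k.
Hypothesis Hr : forall a k, mulA m a u k = a k.
Hypothesis Hs : forall i j k l, P i j k l = P i j l k.
Hypothesis two : (2:K) != 0.

Lemma mulA_ul : mulA m u = fun y => y.
Proof. by do 2 apply: functional_extensionality => ?; apply: Hl. Qed.
Lemma mulAf_u : mulAf u = fun y => y.
Proof. by do 2 apply: functional_extensionality => ?; apply: Hr. Qed.
Lemma mulA_ur y : mulA m y u = y.
Proof. by apply: functional_extensionality => ?; apply: Hr. Qed.

Lemma Q4_pol (H : forall y z i j, Q4 y y z z i j = 0) a b i j :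
  Q4 a u b u i j + Q4 u a b u i j + Q4 a u u b i j + Q4 u a u b i j = 0.
Proof.
have E : 4 * (Q4 a u b u i j + Q4 u a b u i j + Q4 a u u b i j + Q4 u a u b i j) =
  Q4 (fun k => 1 * u k + a k) (fun k => 1 * u k + a k)
     (fun k => 1 * u k + b k) (fun k => 1 * u k + b k) i j
  - Q4 (fun k => 1 * u k + a k) (fun k => 1 * u k + a k)
     (fun k => -1 * u k + b k) (fun k => -1 * u k + b k) i j
  - Q4 (fun k => -1 * u k + a k) (fun k => -1 * u k + a k)
     (fun k => 1 * u k + b k) (fun k => 1 * u k + b k) i j
  + Q4 (fun k => -1 * u k + a k) (fun k => -1 * u k + a k)
     (fun k => -1 * u k + b k) (fun k => -1 * u k + b k) i j.
  by rewrite !Q4_lin1 !Q4_lin2 !Q4_lin3 !Q4_lin4; ring.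
move: E; rewrite !H subrr sub0r oppr0 addr0 => /eqP; rewrite mulf_eq0 => /orP[|/eqP //].
by rewrite (_ : 4 = 2 * 2); [rewrite mulf_eq0 (negbTE two) | ring].
Qed.

Lemma B2uu (H : forall y z i j, Q4 y y z z i j = 0) i j : B2 u u i j = 0.
Proof.
have := H u u i j; rewrite /Q4 mulAf_u mulA_ul /S2; cbv beta.
by rewrite !L2 !sum_bvec addrK.
Qed.

Lemma cocyc_pre (H : forall y z i j, Q4 y y z z i j = 0) a b i j :
  B2 (mulA m a b) u i j =
    \sum_(c < n) B2 a u c j * mulA m (e c) b i
  + \sum_(d < n) B2 a u i d * mulA m (e d) b j
  + \sum_(c < n) B2 b u c j * mulA m a (e c) i
  + \sum_(d < n) B2 b u i d * mulA m a (e d) j - B2 a b i j.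
Proof.
have E := Q4_pol H a b i j.
move: E; rewrite /Q4 mulAf_u mulA_ul mulA_ur /S2; cbv beta.
rewrite !L1 !L2 /mulAf (B2C_f Hs u a) (B2C_f Hs u b) (B2C_f Hs b a) (B2C_f Hs u (mulA m a b)).
move=> E; apply: (solve2 two _ _ _ E); ring.
Qed.


Lemma Delta_f : Delta_of P u = fun x i j => 2 * B2 x u i j.
Proof.
do 3 apply: functional_extensionality => ?.
by rewrite Delta_B2 (B2C Hs _ _ u); ring.
Qed.

Lemma B2_sub x y w i j : B2 (fun k => x k - y k) w i j = B2 x w i j - B2 y w i j.
Proof.
rewrite (_ : (fun k => x k - y k) = fun k => -1 * y k + x k).
  by rewrite B2_linl; ring.
by apply: functional_extensionality => k; ring.
Qed.

Lemma sum_mulB (k : K) (X Y Z : 'I_n -> K) :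
  \sum_(c < n) (k * X c) * (Y c - Z c) =
  k * \sum_(c < n) X c * Y c - k * \sum_(c < n) X c * Z c.
Proof. rewrite !mulr_sumr -sumrB; apply: eq_bigr => c _; ring. Qed.

Lemma Q4_mp : mult_poisson_map m P -> forall y z i j, Q4 y y z z i j = 0.
Proof. by move=> H y z i j; rewrite /Q4; apply/eqP; rewrite subr_eq0; apply/eqP; exact: H. Qed.

Lemma cocycle (H : mult_poisson_map m P) a b i j :
  Delta_of P u (comm_br m a b) i j =
  ad_tens (comm_br m) a (Delta_of P u b) i j - ad_tens (comm_br m) b (Delta_of P u a) i j.
Proof.
rewrite Delta_f /ad_tens /comm_br; cbv beta.
rewrite B2_sub !sum_mulB.
rewrite (cocyc_pre (Q4_mp H) a b) (cocyc_pre (Q4_mp H) b a) (B2C Hs _ _ b a); ring.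
Qed.


Hypothesis hc : forall k : nat, (k.+1)%:R != 0 :> K.

Definition dp (x : vec K n) j k a := dpbr P j k a x.
Lemma dp_f c x x' : dp (fun l => c * x l + x' l) = fun j k a => c * dp x j k a + dp x' j k a.
Proof.
do 3 apply: functional_extensionality => ?.
rewrite /dp /dpbr mulr_sumr -big_split; apply: eq_bigr => l _ /=; ring.
Qed.

Definition T (x1 x2 x3 : vec K n) i j k :=
  \sum_(a < n) B2 x1 x2 i a * dp x3 j k a + \sum_(a < n) B2 x1 x2 j a * dp x3 k i a
  + \sum_(a < n) B2 x1 x2 k a * dp x3 i j a.

Lemma sum1_l (c : K) (F G H : 'I_n -> K) :
  \sum_(a < n) (c * F a + G a) * H a = c * \sum_(a < n) F a * H a + \sum_(a < n) G a * H a.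
Proof. rewrite mulr_sumr -big_split; apply: eq_bigr => a _ /=; ring. Qed.
Lemma sum1_r (c : K) (F G H : 'I_n -> K) :
  \sum_(a < n) H a * (c * F a + G a) = c * \sum_(a < n) H a * F a + \sum_(a < n) H a * G a.
Proof. rewrite mulr_sumr -big_split; apply: eq_bigr => a _ /=; ring. Qed.

Ltac linT := rewrite /T ?B2_linl_f ?B2_linr_f ?dp_f; cbv beta;
  rewrite ?sum1_l ?sum1_r; ring.

Lemma T_lin1 c x x' y z i j k : T (fun l => c * x l + x' l) y z i j k
  = c * T x y z i j k + T x' y z i j k.
Proof. linT. Qed.
Lemma T_lin2 c x x' y z i j k : T y (fun l => c * x l + x' l) z i j k
  = c * T y x z i j k + T y x' z i j k.
Proof. linT. Qed.
Lemma T_lin3 c x x' y z i j k : T y z (fun l => c * x l + x' l) i j k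
  = c * T y z x i j k + T y z x' i j k.
Proof. linT. Qed.

Lemma Jlin (HJ : forall x i j k, T x x x i j k = 0) (BUU : forall i j, B2 u u i j = 0)
  v i j k : T v u u i j k + T u v u i j k = 0.
Proof.
have Tuu : T u u v i j k = 0.
  by rewrite /T !big1 ?addr0 // => a _; rewrite BUU mul0r.
have E : 12 * (T v u u i j k + T u v u i j k + T u u v i j k) =
  8 * (T (fun l => 1 * v l + u l) (fun l => 1 * v l + u l) (fun l => 1 * v l + u l) i j k
     - T (fun l => -1 * v l + u l) (fun l => -1 * v l + u l) (fun l => -1 * v l + u l) i j k)
  - (T (fun l => 2 * v l + u l) (fun l => 2 * v l + u l) (fun l => 2 * v l + u l) i j k
     - T (fun l => -2 * v l + u l) (fun l => -2 * v l + u l) (fun l => -2 * v l + u l) i j k).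
  by rewrite !T_lin1 !T_lin2 !T_lin3; ring.
move: E; rewrite !HJ Tuu addr0 subrr mulr0 subrr => /eqP; rewrite mulf_eq0 => /orP[|/eqP //].
by rewrite (negbTE (hc 11)).
Qed.

Definition cst i j k := dpbr P i j k u.

Lemma Jac (HJ : forall x i j k, T x x x i j k = 0) (BUU : forall i j, B2 u u i j = 0) i j k b :
  \sum_(a < n) cst i a b * cst j k a + \sum_(a < n) cst j a b * cst k i a
  + \sum_(a < n) cst k a b * cst i j a = 0.
Proof.
transitivity (T (e b) u u i j k + T u (e b) u i j k); last exact: Jlin.
rewrite /T /dp /cst.
have G : forall i (F : 'I_n -> K), \sum_(a < n) dpbr P i a b u * F a =
   \sum_(a < n) B2 (e b) u i a * F a + \sum_(a < n) B2 u (e b) i a * F a.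
  by move=> i' F; rewrite -big_split; apply: eq_bigr => a _ /=; rewrite -mulrDl B2_dpbr.
rewrite !G; ring.
Qed.


Lemma dual_br_c : dual_br (Delta_of P u) = fun xi eta k =>
  \sum_(i < n) \sum_(j < n) xi i * eta j * cst i j k.
Proof.
do 3 apply: functional_extensionality => ?.
apply: eq_bigr => i _; apply: eq_bigr => j _.
by rewrite Delta_B2 B2_dpbr.
Qed.

Lemma dualJ (HJ : forall x i j k, T x x x i j k = 0) (BUU : forall i j, B2 u u i j = 0)
  xi eta zeta k :
  dual_br (Delta_of P u) xi (dual_br (Delta_of P u) eta zeta) k
  + dual_br (Delta_of P u) eta (dual_br (Delta_of P u) zeta xi) k
  + dual_br (Delta_of P u) zeta (dual_br (Delta_of P u) xi eta) k = 0.
Proof.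
rewrite dual_br_c; cbv beta.
rewrite !pull [X in X + _ + _]R1 [X in _ + X + _]R2 [X in _ + X]R3.
rewrite -!big_split; apply: big1 => X _ /=.
rewrite -!big_split; apply: big1 => Y _ /=.
rewrite -!big_split; apply: big1 => Z _ /=.
transitivity (xi X * eta Y * zeta Z * (\sum_(a < n) cst X a k * cst Y Z a
  + \sum_(a < n) cst Y a k * cst Z X a + \sum_(a < n) cst Z a k * cst X Y a));
  last by rewrite Jac // mulr0.
rewrite !mulrDr !mulr_sumr -!big_split; apply: eq_bigr => a _ /=; ring.
Qed.

End Unit.

End Gen.

Lemma charK (R : realType) (K : fieldType)
  (hK : K = R :> fieldType \/ K = R[i] :> fieldType) k : (k.+1)%:R != 0 :> K.
Proof. by case: hK => ->; rewrite pnatr_eq0. Qed.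

Theorem lemma3 (R : realType) (K : fieldType)
  (hK : K = R :> fieldType \/ K = R[i] :> fieldType)
  (n : nat) (m : 'I_n -> 'I_n -> 'I_n -> K) (u : vec K n)
  (P : 'I_n -> 'I_n -> 'I_n -> 'I_n -> K) :
  unital_assoc_algebra m u ->
  quadratic_poisson P ->
  mult_poisson_map m P ->
  lie_bialgebra (comm_br m) (Delta_of P u).
Proof.
move=> [_ [Hl Hr]] [Hs [Ha HJ]] Hmp.
have hc := charK R K hK.
have two : (2:K) != 0 := hc 1%N.
have HQ : forall y z i j, Q4 K n P m y y z z i j = 0 by apply: Q4_mp.
have BUU : forall i j, B2 K n P u u i j = 0.
  by move=> i j; apply: (B2uu K n P m u Hl Hr HQ).
have HT : forall x i j k, T K n P x x x i j k = 0 by move=> x i j k; exact: HJ.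
split; [|split; [|split]].
- by move=> c x y i j; rewrite !Delta_B2 B2_linl B2_linr; ring.
- by move=> x i j; rewrite !Delta_B2 (B2N K n P Ha i j x u) (B2N K n P Ha i j u x); ring.
- by move=> a b i j; apply: (cocycle K n P m u Hl Hr Hs two Hmp).
- by move=> xi eta zeta k; apply: (dualJ K n P u hc HT BUU).
Qed.
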